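(* Let $f\in C^1(\mathbb{R}^N)$ have a gradient satisfying $\|\nabla f(x)-\nabla f(y)\|\le c\|x-y\|$ for all $x,y$. Suppose the set $S=\{x:\nabla f(x)=0\}$ is bounded and has only finitely many connected components $S_1,\dots,S_m$, that $f$ takes a constant value $f_i$ on each $S_i$, and that there exists $\epsilon_1'>0$ such that for every $i=1,\dots,m$ and every $x$ with $0<d(x,S_i)<\epsilon_1'$ we have $f(x)\neq f_i$. Then there exists $\epsilon_0'>0$ such that for every $i=1,\dots,m$ and every $x$ with $d(x,S_i)<\epsilon_0'$, $$\|\nabla f(x)\|^2\le 2c\,|f(x)-f_i|.$$
   Context: $d(x,A)=\inf\{\|x-y\|:y\in A\}$, with $\|\cdot\|$ the Euclidean norm. *)

(* Defs.v *)
(* R^N is modelled as row vectors 'rV[R]_N, R : realType. *)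
From HB Require Import structures.
From mathcomp Require Import all_boot all_order all_algebra.
From mathcomp Require Import all_classical all_reals all_analysis.
Set Implicit Arguments. Unset Strict Implicit. Unset Printing Implicit Defensive.
Import Order.TTheory GRing.Theory Num.Theory.
Import numFieldNormedType.Exports.
Local Open Scope classical_set_scope.
Local Open Scope ring_scope.

Definition edot {R : realType} {N : nat} (u v : 'rV[R]_N) : R :=
  \sum_(i < N) u 0 i * v 0 i.

Definition enorm {R : realType} {N : nat} (v : 'rV[R]_N) : R :=
  Num.sqrt (edot v v).

Definition eucl_dist {R : realType} {N : nat} (x : 'rV[R]_N) (A : set 'rV[R]_N) : R :=
  inf [set enorm (x - y) | y in A].

Definition is_gradient {R : realType} {N : nat}
  (f : 'rV[R]_N -> R) (g : 'rV[R]_N -> 'rV[R]_N) : Prop :=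
  forall x, differentiable f x /\ forall h, 'd f x h = edot (g x) h.

(* Main.v *)
Require Import Defs.
From HB Require Import structures.
From mathcomp Require Import all_boot all_order all_algebra.
From mathcomp Require Import all_classical all_reals all_analysis.
From mathcomp Require Import ring lra.
Set Implicit Arguments. Unset Strict Implicit.
Import Order.TTheory GRing.Theory Num.Theory.
Import numFieldNormedType.Exports.
Local Open Scope classical_set_scope.
Local Open Scope ring_scope.

Section Eucl.
Variables (R : realType) (N : nat).
Implicit Types (u v w : 'rV[R]_N).

Lemma edotC u v : edot u v = edot v u.
Proof. by apply: eq_bigr => i _; rewrite mulrC. Qed.

Lemma edotDl u v w : edot (u + w) v = edot u v + edot w v.
Proof. by rewrite /edot -big_split; apply: eq_bigr => i _; rewrite !mxE mulrDl. Qed.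

Lemma edotZl (a : R) u v : edot (a *: u) v = a * edot u v.
Proof. by rewrite /edot mulr_sumr; apply: eq_bigr => i _; rewrite !mxE mulrA. Qed.

Lemma edotNl u v : edot (- u) v = - edot u v.
Proof. by rewrite -scaleN1r edotZl mulN1r. Qed.

Lemma edotBl u v w : edot (u - w) v = edot u v - edot w v.
Proof. by rewrite edotDl edotNl. Qed.

Lemma edotDr u v w : edot v (u + w) = edot v u + edot v w.
Proof. by rewrite !(edotC v) edotDl. Qed.
Lemma edotZr (a : R) u v : edot v (a *: u) = a * edot v u.
Proof. by rewrite !(edotC v) edotZl. Qed.
Lemma edotBr u v w : edot v (u - w) = edot v u - edot v w.
Proof. by rewrite !(edotC v) edotBl. Qed.

Lemma edot_ge0 u : 0 <= edot u u.
Proof. by apply: sumr_ge0 => i _; rewrite -expr2 sqr_ge0. Qed.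

Lemma enorm_ge0 u : 0 <= enorm u.
Proof. exact: sqrtr_ge0. Qed.

Lemma enorm_sq u : enorm u ^+ 2 = edot u u.
Proof. by rewrite /enorm sqr_sqrtr // edot_ge0. Qed.

Lemma edot0 u : edot u u = 0 -> u = 0.
Proof.
move=> h; apply/rowP => i; rewrite mxE.
have := h; rewrite /edot => /eqP; rewrite psumr_eq0; last first.
  by move=> j _; rewrite -expr2 sqr_ge0.
move=> /allP /(_ i (mem_index_enum _)) /implyP /(_ isT).
by rewrite mulf_eq0 orbb => /eqP.
Qed.

Lemma enorm0 u : enorm u = 0 -> u = 0.
Proof. by move=> h; apply: edot0; rewrite -enorm_sq h expr0n. Qed.

Lemma enormZ (a : R) u : enorm (a *: u) = `|a| * enorm u.
Proof. by rewrite /enorm edotZl edotZr mulrA -expr2 sqrtrM ?sqr_ge0 // sqrtr_sqr. Qed.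

Lemma enormN u : enorm (- u) = enorm u.
Proof. by rewrite -scaleN1r enormZ normrN normr1 mul1r. Qed.

Lemma enormB u v : enorm (u - v) = enorm (v - u).
Proof. by rewrite -enormN opprB. Qed.

Lemma CS u v : edot u v <= enorm u * enorm v.
Proof.
set a := enorm u; set b := enorm v.
have [a0|] := eqVneq a 0.
  by rewrite (enorm0 a0) /edot big1 ?mulr_ge0 ?enorm_ge0 // => i _; rewrite mxE mul0r.
have [b0|] := eqVneq b 0.
  by rewrite (enorm0 b0) /edot big1 ?mulr_ge0 ?enorm_ge0 // => i _; rewrite mxE mulr0.
move=> bn0 an0.
have ha : 0 < a by rewrite lt_def an0 enorm_ge0.
have hb : 0 < b by rewrite lt_def bn0 enorm_ge0.
have := edot_ge0 (b *: u - a *: v).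
rewrite !edotBl !edotBr !edotZl !edotZr -!enorm_sq -/a -/b (edotC v u).
move=> h.
have hab : 0 < a * b by apply: mulr_gt0.
rewrite -(ler_pM2l hab); nra.
Qed.

Lemma enormD u v : enorm (u + v) <= enorm u + enorm v.
Proof.
rewrite -ler_sqr ?nnegrE ?addr_ge0 ?enorm_ge0 //.
rewrite enorm_sq edotDl !edotDr (edotC v u) -!enorm_sq.
have := CS u v; nra.
Qed.

End Eucl.

Section Dist.
Variables (R : realType) (N : nat).
Implicit Types (x y z w : 'rV[R]_N) (A : set 'rV[R]_N).

Lemma dist_lb x A : has_lbound [set enorm (x - y) | y in A].
Proof. by exists 0 => _ [y _ <-]; apply: enorm_ge0. Qed.

Lemma dist_ge0 x A : A !=set0 -> 0 <= eucl_dist x A.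
Proof.
move=> [z Az]; apply: lb_le_inf; first by exists (enorm (x - z)), z.
by move=> _ [y _ <-]; apply: enorm_ge0.
Qed.

Lemma dist_le x A z : A z -> eucl_dist x A <= enorm (x - z).
Proof. by move=> Az; apply: ge_inf; [apply: dist_lb | exists z]. Qed.

Lemma dist_approx x A e : A !=set0 -> 0 < e ->
  exists2 z, A z & enorm (x - z) < eucl_dist x A + e.
Proof.
move=> [z0 Az0] e0.
have := @inf_lt R [set enorm (x - y) | y in A] (eucl_dist x A + e).
case.
- by exists (enorm (x - z0)), z0.
- by rewrite ltrDl.
by move=> _ [y Ay <-] h; exists y.
Qed.

Lemma dist_tri x w A : A !=set0 ->
  eucl_dist w A <= enorm (w - x) + eucl_dist x A.
Proof.
move=> A0; apply/ler_addgt0Pr => e e0.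
have [z Az hz] := dist_approx x A0 e0.
apply: (le_trans (dist_le w Az)).
have -> : w - z = (w - x) + (x - z) by rewrite addrA subrK.
apply: (le_trans (enormD _ _)); rewrite -addrA lerD2l; exact: ltW.
Qed.

Lemma grad_dist (g : 'rV[R]_N -> 'rV[R]_N) (c : R) A w :
  (forall x y, enorm (g x - g y) <= c * enorm (x - y)) -> 0 <= c ->
  (forall z, A z -> g z = 0) -> A !=set0 ->
  enorm (g w) <= c * eucl_dist w A.
Proof.
move=> Lg c0 gA A0; apply/ler_addgt0Pr => e e0.
have [c0'|cpos] := eqVneq c 0.
  have [z Az _] := dist_approx w A0 e0.
  have := Lg w z; rewrite (gA z Az) subr0 c0' mul0r mul0r add0r => h.
  exact: (le_trans h (ltW e0)).
have cp : 0 < c by rewrite lt_def cpos c0.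
have [z Az hz] := dist_approx w A0 (divr_gt0 e0 cp).
have := Lg w z; rewrite (gA z Az) subr0 => h; apply: (le_trans h).
have := ler_pM2l cp; move=> H.
rewrite -[X in _ <= _ + X](mulfVK (lt0r_neq0 cp)) [e / c * c]mulrC -mulrDr.
by rewrite ler_pM2l // ltW.
Qed.

End Dist.

Lemma scR (R : realType) (a b : R) : a *: b = a * b. Proof. by []. Qed.

Section Descent.
Variables (R : realType) (N : nat) (f : 'rV[R]_N -> R) (g : 'rV[R]_N -> 'rV[R]_N).
Hypothesis grad : is_gradient f g.

Lemma line_diff (x v : 'rV[R]_N) (s : R) :
  is_diff s (fun t : R => x + t *: v) ( *:%R^~ v).
Proof.
have -> : (fun t : R => x + t *: v) = cst x + ( *:%R^~ v) by apply/funext.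
have H := @is_diffD R R _ (cst x) ( *:%R^~ v) 0 ( *:%R^~ v) s _ _.
apply: (is_diff_eq (H (is_diff_cst _ _) (is_diff_scalel _ _))).
by apply/funext => t /=; rewrite add0r.
Qed.


Lemma line_derive (x v : 'rV[R]_N) (s : R) :
  is_derive s 1 (fun t : R => f (x + t *: v)) (edot (g (x + s *: v)) v).
Proof.
pose l := (fun t : R => x + t *: v).
have Ld := line_diff x v s.
have dl : differentiable l s by exact: ex_diff.
have df := proj1 (grad (l s)).
have dh : differentiable (f \o l) s by apply: differentiable_comp.
have -> : (fun t : R => f (x + t *: v)) = f \o l by [].
apply: DeriveDef; first exact/derivable1_diffP.
rewrite deriveE // diff_comp //= (proj2 (grad (l s))).
by rewrite diff_val scale1r.
Qed.


Variable c : R.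
Hypothesis Lg : forall x y, enorm (g x - g y) <= c * enorm (x - y).
Hypothesis c0 : 0 <= c.

Lemma descent_gen (x v : 'rV[R]_N) (sg : R) : (sg = 1 \/ sg = -1) ->
  sg * (f (x + v) - f x - edot (g x) v) <= c / 2 * enorm v ^+ 2.
Proof.
move=> hsg.
set a := edot (g x) v; set e := c / 2 * enorm v ^+ 2.
pose h := (fun t : R => f (x + t *: v)).
pose k : R -> R := sg \*: h - (sg * a) \*: (@id R) - e \*: (@id R * @id R).
have Dk (t : R) : is_derive t (1:R) k (sg *: edot (g (x + t *: v)) v - (sg * a) *: 1 - e *: (t *: 1 + t *: 1)).
  apply: is_deriveB; apply: is_deriveB; apply: is_deriveZ; exact: line_derive.
have [t t01 Ht] := @MVT R k _ 0 1 ltr01 (fun t _ => Dk t)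
  (derivable_within_continuous (fun t _ => @ex_derive _ _ _ _ _ _ _ (Dk t))).
have E1 : k 1 = sg * f (x + v) - sg * a - e.
  rewrite /k /h /= !fctE /GRing.scale_fun /= scale1r !scR !mulr1 //.
have E0 : k 0 = sg * f x.
  rewrite /k /h /= !fctE /GRing.scale_fun /= scale0r addr0 !scR !mulr0 !subr0 //.
move: Ht; rewrite E1 E0 subr0 mulr1 !scR !mulr1 => Ht.
have t0 : 0 < t by move: t01; rewrite in_itv /= => /andP[].
have key : sg * (edot (g (x + t *: v)) v - a) <= c * t * enorm v ^+ 2.
  have -> : sg * (edot (g (x + t *: v)) v - a) = edot (sg *: (g (x + t *: v) - g x)) v.
    by rewrite edotZl edotBl.
  apply: (le_trans (CS _ _)); rewrite enormZ.
  have -> : `|sg| = 1 by case: hsg => ->; rewrite ?normrN normr1.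
  rewrite mul1r expr2 mulrA; apply: ler_wpM2r; first exact: enorm_ge0.
  by have := Lg (x + t *: v) x; rewrite addrAC subrr add0r enormZ ger0_norm ?(ltW t0) // mulrA.
move: Ht key; rewrite /e; lra.
Qed.
End Descent.

Unset Implicit Arguments.

Lemma enorm_0 (R : realType) (N : nat) : enorm (0 : 'rV[R]_N) = 0.
Proof. by have := enormZ 0 (0 : 'rV[R]_N); rewrite scale0r normr0 mul0r. Qed.

Theorem lemma4 (R : realType) (N : nat) (f : 'rV[R]_N -> R)
  (g : 'rV[R]_N -> 'rV[R]_N) (c : R)
  (m : nat) (S : 'I_m -> set 'rV[R]_N) (fv : 'I_m -> R) :
  (* f is C^1 with gradient g *)
  is_gradient f g -> continuous g ->
  (* the gradient is c-Lipschitz *)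
  (forall x y, enorm (g x - g y) <= c * enorm (x - y)) ->
  (* the critical set is bounded *)
  (exists M : R, forall x, g x = 0 -> enorm x <= M) ->
  (* S_1, ..., S_m are exactly the (distinct) connected components of {x | g x = 0} *)
  (forall i, exists2 x, g x = 0 & S i = connected_component [set y | g y = 0] x) ->
  (forall x, g x = 0 -> exists i, S i x) ->
  injective S ->
  (* f takes the constant value fv i on S i *)
  (forall i x, S i x -> f x = fv i) ->
  (exists2 eps1 : R, 0 < eps1 &
     forall i x, 0 < eucl_dist x (S i) < eps1 -> f x != fv i) ->
  exists2 eps0 : R, 0 < eps0 &
    forall i x, eucl_dist x (S i) < eps0 ->
      enorm (g x) ^+ 2 <= 2 * c * `|f x - fv i|.
Proof.
move=> grad gcont Lg _ Scomp Scover Sinj Sval [eps1 e1pos Heps1].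
have Sne i : S i !=set0.
  by case: (Scomp i) => z gz ->; exists z; apply: connected_component_refl.
have Sg i y : S i y -> g y = 0.
  by case: (Scomp i) => z gz -> /connected_component_sub.
have [cneg|c0] := ltP c 0.
  have eqall (y z : 'rV[R]_N) : y = z.
    have := Lg y z; have h0 := enorm_ge0 (g y - g z); have h1 := enorm_ge0 (y - z).
    move=> h; have e0 : enorm (y - z) = 0 by nra.
    by apply/eqP; rewrite -subr_eq0; apply/eqP/enorm0.
  exists 1 => // i x _.
  have [z Siz] := Sne i.
  rewrite (eqall x z) (Sg i z Siz) (Sval i z Siz) subrr normr0 mulr0 enorm_0.
  by rewrite expr0n.
exists (eps1 / 2); first by rewrite divr_gt0.
move=> i x dx.
set d := eucl_dist x (S i).
have d0 : 0 <= d := dist_ge0 x (Sne i).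
set G := enorm (g x).
have G0 : 0 <= G := enorm_ge0 _.
have Gd : G <= c * d := grad_dist x Lg c0 (Sg i) (Sne i).
rewrite leNgt; apply/negP => hlt.
have habs := normr_ge0 (f x - fv i).
have Gp : 0 < G by nra.
have cp : 0 < c by nra.
pose s := c^-1.
have sp : 0 < s by rewrite invr_gt0.
have cs : c * s = 1 by rewrite mulfV // lt0r_neq0.
pose phi t := f (x + t *: g x).
have phic : {within `[- s, s], continuous phi}.
  apply: derivable_within_continuous => t _.
  exact: (@ex_derive _ _ _ _ _ _ _ (line_derive grad x (g x) t)).
have hs2 : 2 * `|f x - fv i| < s * G ^+ 2.
  have := hlt; rewrite -(ltr_pM2l sp).
  have -> : s * (2 * c * `|f x - fv i|) = 2 * `|f x - fv i| * (c * s) by ring.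
  by rewrite cs mulr1.
have eG : c / 2 * enorm (s *: g x) ^+ 2 = s * G ^+ 2 / 2.
  rewrite enormZ ger0_norm ?(ltW sp) // -/G.
  have -> : c / 2 * (s * G) ^+ 2 = s * G ^+ 2 / 2 * (c * s) by ring.
  by rewrite cs mulr1.
have ed : edot (g x) (s *: g x) = s * G ^+ 2 by rewrite edotZr -enorm_sq.
have up := descent_gen grad Lg x (s *: g x) (or_intror erefl).
rewrite eG ed in up.
have dn := descent_gen grad Lg x ((- s) *: g x) (or_introl erefl).
have edN : edot (g x) ((- s) *: g x) = - (s * G ^+ 2) by rewrite edotZr -enorm_sq mulNr.
rewrite edN scaleNr enormN eG in dn.
have n1 := ler_norm (f x - fv i).
have n2 := ler_norm (fv i - f x); rewrite distrC in n2.
have phis : fv i < phi s by rewrite /phi; lra.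
have phims : phi (- s) < fv i by rewrite /phi scaleNr; lra.
have [t tin pt] : exists2 t, t \in `[- s, s] & phi t = fv i.
  apply: IVT => //; first by rewrite ge0_cp // ltW.
  apply/andP; split.
    by rewrite ge_min; apply/orP; left; apply: ltW.
  by rewrite le_max; apply/orP; right; apply: ltW.
move: tin; rewrite in_itv /= => /andP[t1 t2].
have tns : t != s by apply/eqP => ets; move: phis; rewrite -ets pt ltxx.
have tnms : t != - s by apply/eqP => ets; move: phims; rewrite -ets pt ltxx.
have ta : `|t| < s.
  rewrite ltr_norml; apply/andP; split.
    by rewrite lt_neqAle t1 andbT eq_sym tnms.
  by rewrite lt_neqAle t2 andbT tns.
pose w := x + t *: g x.
have wx : enorm (w - x) = `|t| * G by rewrite /w addrAC subrr add0r enormZ.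
have sGd : s * G <= d.
  by rewrite -(ler_pM2l sp) mulrA (mulrC s c) cs mul1r in Gd.
have tG : `|t| * G < s * G by rewrite ltr_pM2r.
have dw := dist_tri x w (Sne i).
have dw0 : eucl_dist w (S i) = 0.
  have := dist_ge0 w (Sne i); rewrite le_eqVlt => /orP[/eqP <- //|dpos].
  have : f w != fv i by apply: Heps1; rewrite dpos /=; lra.
  by rewrite -pt eqxx.
have gw : g w = 0.
  apply: enorm0; have := grad_dist w Lg c0 (Sg i) (Sne i); rewrite dw0 mulr0 => h.
  by apply/eqP; rewrite eq_le h enorm_ge0.
have := Lg x w; rewrite gw subr0 -/G enormB wx => h.
have : c * `|t| < 1 by rewrite -cs ltr_pM2l.
nra.
Qed.
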